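(* Let $P_1$ be the uniform distribution on $[0,\frac12]$, let $P_2$ be the uniform distribution on $[\frac12,1]$, and let $P=\frac34P_1+\frac14P_2$. Then the set $\{\frac14,\frac34\}$ forms an optimal set of two-means for $P$, with quantization error $V_2=\frac1{48}$.
   Context: For a finite set $\alpha\subset\mathbb R$, $V(P;\alpha)=\int\min_{a\in\alpha}(x-a)^2\,dP(x)$; $V_n=\inf\{V(P;\alpha):\mathrm{card}(\alpha)\le n\}$; an optimal set of $n$-means is a set $\alpha$ with $\mathrm{card}(\alpha)\le n$ and $V(P;\alpha)=V_n$. *)

(* Defs.v *)
From HB Require Import structures.
From mathcomp Require Import all_boot all_order all_algebra finmap.
From mathcomp Require Import all_classical all_reals all_analysis.
Set Implicit Arguments. Unset Strict Implicit. Unset Printing Implicit Defensive.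
Import Order.TTheory GRing.Theory Num.Theory.
Local Open Scope classical_set_scope.
Local Open Scope ring_scope.
Local Open Scope fset_scope.

Section quantization.
Context {R : realType}.

(* min_{a in alpha} (x - a)^2, as an extended real (+oo for the empty set) *)
Definition min_sqdist (alpha : {fset R}) (x : R) : \bar R :=
  \big[mine/+oo%E]_(a <- alpha) (((x - a) ^+ 2)%:E).

Definition Vq (P : {measure set (measurableTypeR R) -> \bar R}) (alpha : {fset R}) : \bar R :=
  (\int[P]_x min_sqdist alpha x)%E.

Definition Vn (P : {measure set (measurableTypeR R) -> \bar R}) (n : nat) : \bar R :=
  ereal_inf [set Vq P alpha | alpha in [set alpha : {fset R} | (#|` alpha| <= n)%N]].

Definition optimal_set (P : {measure set (measurableTypeR R) -> \bar R}) (n : nat) (alpha : {fset R}) : Prop :=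
  (#|` alpha| <= n)%N /\ Vq P alpha = Vn P n.

Lemma lt_0_half : (0 : R) < 1/2. Proof. by rewrite divr_gt0 ?ltr01 ?ltr0n. Qed.
Lemma lt_half_1 : (1/2 : R) < 1.
Proof. by rewrite ltr_pdivrMr ?ltr0n // mul1r ltr1n. Qed.

Definition P1 : {measure set (measurableTypeR R) -> \bar R} := uniform_prob lt_0_half.
Definition P2 : {measure set (measurableTypeR R) -> \bar R} := uniform_prob lt_half_1.

Definition Pmix : {measure set (measurableTypeR R) -> \bar R} :=
  measure_add (mscale ((3/4 : R)%:nng) P1) (mscale ((1/4 : R)%:nng) P2).
End quantization.

(* Main.v *)
Set Warnings "-notation-overridden,-notation-incompatible-prefix,-ambiguous-paths,-deprecated".
Require Import Defs.
From HB Require Import structures.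
From mathcomp Require Import all_boot all_order all_algebra finmap.
From mathcomp Require Import all_classical all_reals all_analysis.
From mathcomp Require Import measurable_realfun.
From mathcomp Require Import lra ring.
Import Order.TTheory GRing.Theory Num.Theory numFieldNormedType.Exports.
Local Open Scope ring_scope.
Local Open Scope fset_scope.
Section S.
Context {R : realType}.
Local Open Scope classical_set_scope.

Lemma sq_deriv (c x : R) : is_derive x 1 (fun y : R => (y - c)^+3 / 3%:R) ((x - c)^+2).
Proof.
apply: trigger_derive; rewrite /GRing.scale /= !subr0 !mulr0 ?addr0 !mulr1.
by field.
Qed.

Lemma sq_derivable (c x : R) : derivable (fun y : R => (y - c)^+3 / 3%:R) x 1.
Proof. apply: ex_derive; exact: sq_deriv. Qed.

Lemma sq3_cont (c : R) : continuous (fun y : R => (y - c)^+3 / 3%:R).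
Proof.
move=> x; apply: differentiable_continuous; rewrite -derivable1_diffP.
exact: sq_derivable.
Qed.

Lemma sq_cont (c : R) : continuous (fun y : R => (y - c)^+2).
Proof.
move=> x; apply: differentiable_continuous; rewrite -derivable1_diffP.
apply: ex_derive; apply: trigger_derive; reflexivity.
Qed.

Lemma mf_sq (c : R) (D : set R) : measurable_fun D (fun y : R => ((y - c)^+2)%:E).
Proof.
apply/measurable_EFinP; apply: measurable_funTS.
exact: continuous_measurable_fun (sq_cont c).
Qed.

Lemma int_sq (c u v : R) (b0 b1 : bool) : u <= v ->
  (\int[lebesgue_measure]_(x in [set` Interval (BSide b0 u) (BSide b1 v)])
     ((x - c)^+2)%:E = (((v - c)^+3 - (u - c)^+3) / 3%:R)%:E)%E.
Proof.
move=> uv; rewrite integral_itv_bndoo; last exact: mf_sq.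
move: uv; rewrite le_eqVlt => /predU1P[<-|uv].
  by rewrite set_itvoo0 integral_set0 subrr mul0r.
rewrite -(@integral_itv_bndoo _ _ _ _ true false); last exact: mf_sq.
rewrite (@continuous_FTC2 _ _ (fun y : R => (y - c)^+3 / 3%:R)) //.
- by rewrite -EFinB mulrBl.
- by apply: continuous_in_subspaceT => x _; exact: sq_cont.
- split.
  + by move=> x _; exact: sq_derivable.
  + apply: cvg_at_right_filter; exact: sq3_cont.
  + apply: cvg_at_left_filter; exact: sq3_cont.
- by move=> x _; rewrite derive1E; apply: derive_val; exact: sq_deriv.
Qed.

Lemma mf_sq_real (c : R) (D : set R) : measurable_fun D (fun y : R => (y - c)^+2).
Proof. apply: measurable_funTS. exact: continuous_measurable_fun (sq_cont c). Qed.

Definition hh (a b x : R) : R := Num.min ((x - a)^+2) ((x - b)^+2).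

Lemma mf_hh (a b : R) (D : set R) : measurable_fun D (fun x => (hh a b x)%:E).
Proof.
apply/measurable_EFinP; apply: measurable_minr; exact: mf_sq_real.
Qed.

Lemma hh_ge0 a b x : (0 <= (hh a b x)%:E)%E.
Proof. by rewrite lee_fin /hh le_min !sqr_ge0. Qed.

Lemma mix_int (f : R -> \bar R) : measurable_fun setT f -> (forall x, 0 <= f x)%E ->
  (\int[Pmix]_x f x = (3/2 : R)%:E * \int[lebesgue_measure]_(x in `[0%R, (1/2)%R]) f x
     + (1/2 : R)%:E * \int[lebesgue_measure]_(x in `[(1/2)%R, 1%R]) f x)%E.
Proof.
move=> mf f0.
have f0' : forall x, setT x -> (0 <= f x)%E by move=> x _; exact: f0.
rewrite /Pmix ge0_integral_measure_add // !ge0_integral_mscale //.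
rewrite /P1 /P2 !integral_uniform //.
rewrite /= !muleA -!EFinM; congr (_ * _ + _ * _)%E; congr EFin; by field.
Qed.


Lemma hh_l a b x : a <= b -> x <= (a + b) / 2 -> hh a b x = (x - a)^+2.
Proof. move=> ab xt; rewrite /hh; apply: min_l; nra. Qed.

Lemma hh_r a b x : a <= b -> (a + b) / 2 <= x -> hh a b x = (x - b)^+2.
Proof. move=> ab xt; rewrite /hh; apply: min_r; nra. Qed.

Definition F2 (a b s : R) : R :=
  3/2 * (((1/2 - a)^+3 - (0 - a)^+3) / 3%:R) +
  1/2 * ((((s - a)^+3 - (1/2 - a)^+3) / 3%:R) + (((1 - b)^+3 - (s - b)^+3) / 3%:R)).

Lemma caseB a b : a <= b -> 1/2 <= (a + b) / 2 ->
  (\int[Pmix]_x (hh a b x)%:E = (F2 a b (Num.min ((a + b) / 2) 1))%:E)%E.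
Proof.
move=> ab ht.
set t := (a + b) / 2; set s := Num.min t 1.
have hs1 : 1/2 <= s by rewrite /s le_min ht /=; lra.
have hs2 : s <= 1 by rewrite /s ge_min lexx orbT.
rewrite mix_int; [|exact: mf_hh|exact: hh_ge0].
rewrite [X in (_ * X + _)%E](@eq_integral _ _ _ (@lebesgue_measure R) _ (fun x => ((x - a)^+2)%:E)); last first.
  move=> x; rewrite inE /= in_itv /= => /andP[_ x2].
  by rewrite hh_l //; lra.
rewrite [in X in (_ + _ * X)%E](@itv_bndbnd_setU _ _ _ (BRight s)); last 2 first.
  - by rewrite bnd_simp.
  - by rewrite bnd_simp.
rewrite ge0_integral_setU //; last 3 first.
  - exact: mf_hh.
  - by move=> x _; exact: hh_ge0.
  - rewrite disj_set2E; apply/eqP/seteqP; split => x //=.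
    rewrite !in_itv /= => -[/andP[_ xs] /andP[sx _]]; lra.
rewrite [X in (_ + _ * (X + _))%E](@eq_integral _ _ _ (@lebesgue_measure R) _ (fun x => ((x - a)^+2)%:E)); last first.
  move=> x; rewrite inE /= in_itv /= => /andP[_ xs].
  rewrite hh_l //; rewrite (le_trans xs) // /s ge_min lexx //.
rewrite [X in (_ + _ * (_ + X))%E](@eq_integral _ _ _ (@lebesgue_measure R) _ (fun x => ((x - b)^+2)%:E)); last first.
  move=> x; rewrite inE /= in_itv /= => /andP[sx x1].
  rewrite hh_r //; move: sx; rewrite /s gt_min => /orP[/ltW //|h1].
  lra.
rewrite !int_sq //; try lra.
Qed.

Definition F1 (a b s : R) : R :=
  3/2 * ((((s - a)^+3 - (0 - a)^+3) / 3%:R) + (((1/2 - b)^+3 - (s - b)^+3) / 3%:R)) +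
  1/2 * (((1 - b)^+3 - (1/2 - b)^+3) / 3%:R).

Lemma caseA a b : a <= b -> (a + b) / 2 < 1/2 ->
  (\int[Pmix]_x (hh a b x)%:E = (F1 a b (Num.max ((a + b) / 2) 0))%:E)%E.
Proof.
move=> ab ht.
set t := (a + b) / 2; set s := Num.max t 0.
have hs1 : 0 <= s by rewrite /s le_max lexx orbT.
have hs2 : s <= 1/2.
  by rewrite /s ge_max (ltW ht) /=; lra.
rewrite mix_int; [|exact: mf_hh|exact: hh_ge0].
rewrite [X in (_ + _ * X)%E](@eq_integral _ _ _ (@lebesgue_measure R) _ (fun x => ((x - b)^+2)%:E)); last first.
  move=> x; rewrite inE /= in_itv /= => /andP[x2 _].
  by rewrite hh_r //; lra.
rewrite [in X in (_ * X + _)%E](@itv_bndbnd_setU _ _ _ (BLeft s)); last 2 first.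
  - by rewrite bnd_simp.
  - by rewrite bnd_simp.
rewrite ge0_integral_setU //; last 3 first.
  - exact: mf_hh.
  - by move=> x _; exact: hh_ge0.
  - rewrite disj_set2E; apply/eqP/seteqP; split => x //=.
    rewrite !in_itv /= => -[/andP[_ xs] /andP[sx _]]; lra.
rewrite [X in (_ * (X + _) + _)%E](@eq_integral _ _ _ (@lebesgue_measure R) _ (fun x => ((x - a)^+2)%:E)); last first.
  move=> x; rewrite inE /= in_itv /= => /andP[x0 xs].
  rewrite hh_l //; move: xs; rewrite /s lt_max => /orP[/ltW //|h1].
  lra.
rewrite [X in (_ * (_ + X) + _)%E](@eq_integral _ _ _ (@lebesgue_measure R) _ (fun x => ((x - b)^+2)%:E)); last first.
  move=> x; rewrite inE /= in_itv /= => /andP[sx x1].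
  rewrite hh_r //; move: sx; rewrite /s ge_max => /andP[] //.
rewrite !int_sq //; try lra.
Qed.

Lemma F1_ge a b s : 0 <= s <= 1/2 -> 1/48 <= F1 a b s.
Proof.
move=> /andP[s0 s1].
set m := 1 - 3/2 * s.
have hm : 0 < m by rewrite /m; lra.
have id : (m * (F1 a b s - 1/48) = 3/2 * s * m * (a - s/2)^+2 + (m * b - (3/8 - 3/4 * s^+2))^+2
   + 3/64 * (1 - 2 * s)^+3)%R.
  by rewrite /F1 /m; field.
have : 0 <= m * (F1 a b s - 1/48).
  rewrite id; apply: addr_ge0; [apply: addr_ge0|].
  - by apply: mulr_ge0; [apply: mulr_ge0; [apply: mulr_ge0; lra|lra]|exact: sqr_ge0].
  - exact: sqr_ge0.
  - apply: mulr_ge0; [lra|apply: exprn_ge0; lra].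
rewrite pmulr_rge0 // subr_ge0 //.
Qed.

Lemma F2_ge a b s : 1/2 <= s <= 1 -> 1/48 <= F2 a b s.
Proof.
move=> /andP[s0 s1].
set m := (1 + s) / 2.
have hm : 0 < m by rewrite /m; lra.
have id : (m * (F2 a b s - 1/48) = m * (1/2) * (1 - s) * (b - (1 + s)/2)^+2 + (m * a - (1/8 + s^+2/4))^+2
   + (1 - 2 * s)^+2 * (1 + 2 * s) / 64)%R.
  by rewrite /F2 /m; field.
have : 0 <= m * (F2 a b s - 1/48).
  rewrite id; apply: addr_ge0; [apply: addr_ge0|].
  - by apply: mulr_ge0; [apply: mulr_ge0; [apply: mulr_ge0; lra|lra]|exact: sqr_ge0].
  - exact: sqr_ge0.
  - apply: mulr_ge0; [apply: mulr_ge0; [exact: sqr_ge0|lra]|lra].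
rewrite pmulr_rge0 // subr_ge0 //.
Qed.

Lemma lb_hh a b : ((1/48 : R)%:E <= \int[Pmix]_x (hh a b x)%:E)%E.
Proof.
wlog ab : a b / a <= b.
  move=> H; case: (leP a b) => [/H //|/ltW ba].
  rewrite (_ : (fun x => (hh a b x)%:E) = (fun x => (hh b a x)%:E)); first exact: H.
  by apply/funext => x; rewrite /hh minC.
case: (ltP ((a + b) / 2) (1/2)) => ht.
- rewrite caseA // lee_fin; apply: F1_ge; apply/andP; split.
    by rewrite le_max lexx orbT.
  by rewrite ge_max (ltW ht) /=; lra.
- rewrite caseB // lee_fin; apply: F2_ge; apply/andP; split.
    by rewrite le_min ht /=; lra.
  by rewrite ge_min lexx orbT.
Qed.

Lemma val_opt : (\int[Pmix]_x (hh (1/4) (3/4) x)%:E = (1/48 : R)%:E)%E.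
Proof.
rewrite caseB; [|lra|lra].
have -> : Num.min ((1/4 + 3/4) / 2) 1 = 1/2 :> R.
  by rewrite (_ : (1/4 + 3/4) / 2 = 1/2 :> R); [apply: min_l; lra | field].
by rewrite /F2; congr EFin; field.
Qed.

Lemma lb_seq (l : seq R) : (size l <= 2)%N ->
  ((1/48 : R)%:E <= \int[Pmix]_x \big[mine/+oo%E]_(c <- l) ((x - c)^+2)%:E)%E.
Proof.
case: l => [|a [|b [|c l]]] //= _.
- apply: (le_trans (lb_hh 0 0)).
  apply: ge0_le_integral => //.
  + by move=> x _; exact: hh_ge0.
  + exact: mf_hh.
  + rewrite (_ : (fun x => _) = (fun _ => +oo%E)); [exact: measurable_cst | by apply/funext => x; rewrite big_nil].
  + by move=> x _; rewrite big_nil leey.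
- rewrite (_ : (fun x => _) = (fun x => (hh a a x)%:E)); first exact: lb_hh.
  by apply/funext => x; rewrite big_cons big_nil miney /hh minxx.
- rewrite (_ : (fun x => _) = (fun x => (hh a b x)%:E)); first exact: lb_hh.
  by apply/funext => x; rewrite !big_cons big_nil miney /hh EFin_min.
Qed.

End S.

Theorem lemma4p4 (R : realType) :
  optimal_set (@Pmix R) 2 [fset (1/4 : R); 3/4] /\
  Vn (@Pmix R) 2 = ((1/48 : R)%:E)%E.
Proof.
have Vopt : Vq (@Pmix R) [fset (1/4 : R); 3/4] = ((1/48 : R)%:E)%E.
  rewrite /Vq (_ : (fun x => min_sqdist _ x) = (fun x => (hh (1/4) (3/4) x)%:E)) ?val_opt //.
  apply/funext => x; rewrite /min_sqdist big_fsetU1 /= ?big_seq_fset1 /hh ?EFin_min //.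
  by rewrite in_fset1; apply/eqP => h; lra.
have card2 : (#|` [fset (1/4 : R); 3/4]| <= 2)%N by rewrite cardfs2; case: (_ != _).
have VnE : Vn (@Pmix R) 2 = ((1/48 : R)%:E)%E.
  apply/eqP; rewrite eq_le; apply/andP; split.
  - rewrite -Vopt; apply: ereal_inf_lbound; by exists [fset (1/4 : R); 3/4].
  - apply: le_ereal_inf_tmp => y [alpha halpha <-].
    rewrite /Vq /min_sqdist; exact: lb_seq.
by split; [split => //; rewrite Vopt VnE | exact VnE].
Qed.
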